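(* Let $\mathcal{A}$ be a Banach algebra such that $\mathrm{rad}(\mathcal{A})=\mathrm{rann}(\mathcal{A})$ and $\mathcal{A}/\mathrm{rad}(\mathcal{A})$ is commutative, and suppose $\mathcal{A}$ has a right identity. Then the algebra $\mathfrak{C}(\mathcal{A})$ of all centralizing generalized derivations of $\mathcal{A}$ (with composition as product) is isomorphic to $\mathcal{A}/\mathrm{rad}(\mathcal{A})$.
   Context: $\mathrm{rad}(\mathcal{A})$ is the Jacobson radical and $\mathrm{rann}(\mathcal{A})=\{c\in\mathcal{A}: ac=0\ \forall a\in\mathcal{A}\}$. A derivation is a linear map $d$ with $d(ab)=d(a)b+ad(b)$; a generalized derivation is a linear $\delta$ for which there is a derivation $d$ with $\delta(ab)=a\delta(b)+d(a)b$. It is centralizing if $[\delta(a),a]\in Z(\mathcal{A})$ for all $a$, where $Z(\mathcal{A})$ is the center and $[x,y]=xy-yx$. $\mathfrak{C}(\mathcal{A})$ is regarded as a subalgebra of the algebra of bounded linear operators on $\mathcal{A}$. *)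

(* Defs.v *)
From HB Require Import structures.
From mathcomp Require Import all_boot all_order all_algebra.
From mathcomp Require Import complex.
From mathcomp Require Import all_classical all_reals all_analysis.
Set Implicit Arguments. Unset Strict Implicit. Unset Printing Implicit Defensive.
Import Order.TTheory GRing.Theory Num.Theory.
Import numFieldNormedType.Exports.
Local Open Scope ring_scope.

Section BanachAlgebra.
Variables (K : numFieldType) (V : completeNormedModType K) (mul : V -> V -> V).

Definition is_banach_algebra : Prop :=
  [/\ forall a b c, mul a (mul b c) = mul (mul a b) c,
      forall k a b c, mul (k *: a + b) c = k *: mul a c + mul b c,
      forall k a b c, mul a (k *: b + c) = k *: mul a b + mul a c
    & forall a b, `|mul a b| <= `|a| * `|b| ].

Definition is_linear_map (f : V -> V) : Prop :=
  forall k x y, f (k *: x + y) = k *: f x + f y.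

Definition is_derivation (d : V -> V) : Prop :=
  is_linear_map d /\ forall a b, d (mul a b) = mul (d a) b + mul a (d b).

Definition is_gen_derivation (delta : V -> V) : Prop :=
  is_linear_map delta /\
  exists d, is_derivation d /\
    forall a b, delta (mul a b) = mul a (delta b) + mul (d a) b.

Definition center (z : V) : Prop := forall a, mul z a = mul a z.

Definition commutator (x y : V) : V := mul x y - mul y x.

Definition is_centralizing (delta : V -> V) : Prop :=
  forall a, center (commutator (delta a) a).

Definition is_bounded_operator (f : V -> V) : Prop :=
  is_linear_map f /\ continuous f.

Definition frakC (delta : V -> V) : Prop :=
  is_bounded_operator delta /\ is_gen_derivation delta /\ is_centralizing delta.

Definition rann (c : V) : Prop := forall a, mul a c = 0.

(* Jacobson radical (non-unital setting): a in rad(A) iff every b a is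
   left quasi-invertible, i.e. there is c with c + ba - c(ba) = 0. *)
Definition left_quasi_invertible (x : V) : Prop :=
  exists c, c + x - mul c x = 0.

Definition jacobson_rad (a : V) : Prop :=
  forall b, left_quasi_invertible (mul b a).

Definition has_right_identity : Prop := exists e, forall a, mul a e = a.

Definition quotient_rad_commutative : Prop :=
  forall a b, jacobson_rad (mul a b - mul b a).

(* An algebra isomorphism A/rad(A) -> frakC(A), presented through a map
   Psi : A -> B(A) that is constant on cosets of rad(A) and injective on
   A/rad(A) (Psi a = Psi b <-> a - b in rad(A)), linear, multiplicative for
   composition, with image exactly frakC(A). *)
Definition quotient_rad_iso_frakC (Psi : V -> (V -> V)) : Prop :=
  [/\ forall a b, Psi a = Psi b <-> jacobson_rad (a - b),
      forall k a b, Psi (k *: a + b) = (fun x => k *: Psi a x + Psi b x),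
      forall a b, Psi (mul a b) = (Psi a \o Psi b)
    & forall delta, frakC delta <-> exists a, Psi a = delta ].

End BanachAlgebra.

(* Main.v *)
Require Import Defs.
From HB Require Import structures.
From mathcomp Require Import all_boot all_order all_algebra.
From mathcomp Require Import all_classical.
Set Implicit Arguments. Unset Strict Implicit. Unset Printing Implicit Defensive.
Import Order.TTheory GRing.Theory.
Local Open Scope ring_scope.

Section AEnd.
Variable W : zmodType.
Record aend := AEnd { aef :> W -> W ; aefB : forall x y, aef (x - y) = aef x - aef y }.

Lemma aend_ext (f g : aend) : (forall x, f x = g x) -> f = g.
Proof.
case: f g => f fB [g gB] /= H.
have E : f = g by apply: funext.
subst g; congr AEnd; exact: Prop_irrelevance.
Qed.

HB.instance Definition _ := gen_eqMixin aend.
HB.instance Definition _ := gen_choiceMixin aend.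

Lemma aef0 (f : aend) : f 0 = 0.
Proof. by move: (aefB f 0 0); rewrite !subrr. Qed.
Lemma aefN (f : aend) x : f (- x) = - f x.
Proof. by rewrite -sub0r aefB aef0 sub0r. Qed.
Lemma aefD (f : aend) x y : f (x + y) = f x + f y.
Proof. by have := aefB f x (- y); rewrite opprK aefN opprK. Qed.

Definition ae0 : aend := @AEnd (fun _ => 0) (fun _ _ => esym (subrr 0)).
Lemma aeaddB (f g : aend) x y : (fun z => f z + g z) (x - y) = (fun z => f z + g z) x - (fun z => f z + g z) y.
Proof. by rewrite /= !aefB opprD addrACA. Qed.
Definition aeadd (f g : aend) : aend := AEnd (aeaddB f g).
Lemma aeoppB (f : aend) x y : (fun z => - f z) (x - y) = (fun z => - f z) x - (fun z => - f z) y.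
Proof. by rewrite /= aefB opprB addrC opprK. Qed.
Definition aeopp (f : aend) : aend := AEnd (aeoppB f).
Lemma ae1B x y : (fun z : W => z) (x - y) = x - y. Proof. by []. Qed.
Definition ae1 : aend := AEnd ae1B.
Lemma aemulB (f g : aend) x y : (fun z => f (g z)) (x - y) = (fun z => f (g z)) x - (fun z => f (g z)) y.
Proof. by rewrite /= !aefB. Qed.
Definition aemul (f g : aend) : aend := AEnd (aemulB f g).

Lemma aeaddA : associative aeadd. Proof. by move=> f g h; apply: aend_ext => x /=; rewrite addrA. Qed.
Lemma aeaddC : commutative aeadd. Proof. by move=> f g; apply: aend_ext => x /=; rewrite addrC. Qed.
Lemma aeadd0 : left_id ae0 aeadd. Proof. by move=> f; apply: aend_ext => x /=; rewrite add0r. Qed.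
Lemma aeaddN : left_inverse ae0 aeopp aeadd. Proof. by move=> f; apply: aend_ext => x /=; rewrite addNr. Qed.
HB.instance Definition _ := GRing.isZmodule.Build aend aeaddA aeaddC aeadd0 aeaddN.
Lemma aemulA : associative aemul. Proof. by move=> f g h; apply: aend_ext. Qed.
Lemma aemul1 : left_id ae1 aemul. Proof. by move=> f; apply: aend_ext. Qed.
Lemma aemulr1 : right_id ae1 aemul. Proof. by move=> f; apply: aend_ext. Qed.
Lemma aemulDl : left_distributive aemul +%R. Proof. by move=> f g h; apply: aend_ext. Qed.
Lemma aemulDr : right_distributive aemul +%R.
Proof. by move=> f g h; apply: aend_ext => x /=; rewrite aefD. Qed.
HB.instance Definition _ := GRing.Zmodule_isPzRing.Build aend aemulA aemul1 aemulr1 aemulDl aemulDr.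

Lemma aeE_mul (f g : aend) x : (f * g) x = f (g x). Proof. by []. Qed.
Lemma aeE_add (f g : aend) x : (f + g) x = f x + g x. Proof. by []. Qed.
Lemma aeE_opp (f : aend) x : (- f) x = - f x. Proof. by []. Qed.
Lemma aeE_0 x : (0 : aend) x = 0. Proof. by []. Qed.
Lemma aeE_1 x : (1 : aend) x = x. Proof. by []. Qed.
Lemma aeE_natmul (f : aend) n x : (f *+ n) x = f x *+ n.
Proof. by elim: n => [|n IH]; rewrite ?mulr0n // !mulrS aeE_add IH. Qed.
Lemma aeE_exp (f : aend) n x : (f ^+ n) x = iter n f x.
Proof. by elim: n => [|n IH]; rewrite ?expr0 // exprS aeE_mul IH. Qed.
End AEnd.

(* Kleinecke-Shirokov type identity *)
Section KS.
Variable Rg : pzRingType.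
Variables S D : Rg.
Definition del (T : Rg) := T * S - S * T.
Hypothesis CS : (D * S - S * D) * S = S * (D * S - S * D).
Let C := D * S - S * D.

Lemma delD T U : del (T + U) = del T + del U.
Proof. by rewrite /del mulrDl mulrDr opprD addrACA. Qed.
Lemma del0 : del 0 = 0. Proof. by rewrite /del mul0r mulr0 subrr. Qed.
Lemma delMn T m : del (T *+ m) = del T *+ m.
Proof. by elim: m => [|m IH]; rewrite ?mulr0n ?del0 // !mulrS delD IH. Qed.
Lemma delM T U : del (T * U) = del T * U + T * del U.
Proof. by rewrite /del mulrBl mulrBr !mulrA [RHS]addrC addrA subrK. Qed.
Lemma delC : del C = 0.
Proof. by rewrite /del -/C CS subrr. Qed.
Lemma delD' : del D = C. Proof. by []. Qed.

Lemma iter_delD m T U : iter m del (T + U) = iter m del T + iter m del U.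
Proof. by elim: m => //= m IH; rewrite IH delD. Qed.
Lemma iter_del0 m : iter m del 0 = 0.
Proof. by elim: m => //= m ->; rewrite del0. Qed.
Lemma iter_delMn m T k : iter m del (T *+ k) = iter m del T *+ k.
Proof. by elim: m => //= m ->; rewrite delMn. Qed.

Lemma iter_delDU m U : iter m.+1 del (D * U) = D * iter m.+1 del U + (C * iter m del U) *+ m.+1.
Proof.
elim: m => [|m IH]; first by rewrite /= delM delD' addrC.
rewrite iterS IH delD delMn !delM delC mul0r add0r delD'.
by rewrite -!iterS [X in _ = _ + X]mulrS [RHS]addrCA addrA.
Qed.
Lemma KS n : iter n del (D ^+ n) = (C ^+ n) *+ n`! /\ forall m, (n < m)%N -> iter m del (D ^+ n) = 0.
Proof.
elim: n => [|n [IH1 IH2]].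
  split; first by rewrite /= expr0 mulr1n.
  case=> // m _; rewrite expr0.
  elim: m => [|m IH]; first by rewrite /= /del mul1r mulr1 subrr.
  by rewrite iterS IH del0.
split.
  rewrite exprS iter_delDU IH1 (IH2 n.+1) // mulr0 add0r.
  by rewrite mulrnAr -mulrnA exprS factS mulnC.
case=> // m; rewrite ltnS => Hm.
rewrite exprS iter_delDU (IH2 m.+1) ?(IH2 m) // ?mulr0 ?mul0rn ?addr0 //.
by apply: ltnW.
Qed.
End KS.
From HB Require Import structures.
From mathcomp Require Import all_boot all_order all_algebra.
From mathcomp Require Import complex.
From mathcomp Require Import all_classical all_reals all_analysis.
Set Implicit Arguments. Unset Strict Implicit. Unset Printing Implicit Defensive.
Import Order.TTheory GRing.Theory Num.Theory.
Import numFieldNormedType.Exports.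
Local Open Scope ring_scope.
Local Open Scope complex_scope.

Section Alg.
Variables (R : realType) (V : completeNormedModType R[i]) (mul : V -> V -> V).
Hypothesis HBA : is_banach_algebra mul.

Lemma bmulA a b c : mul a (mul b c) = mul (mul a b) c.
Proof. by case: HBA. Qed.
Lemma mul_lin_l k a b c : mul (k *: a + b) c = k *: mul a c + mul b c.
Proof. by case: HBA. Qed.
Lemma mul_lin_r k a b c : mul a (k *: b + c) = k *: mul a b + mul a c.
Proof. by case: HBA. Qed.
Lemma mul_norm a b : `|mul a b| <= `|a| * `|b|.
Proof. by case: HBA. Qed.

Lemma self_add0 (x : V) : x = x + x -> x = 0.
Proof. by move=> H; apply: (addrI x); rewrite addr0 -H. Qed.

Lemma bmul0l c : mul 0 c = 0.
Proof.
have := mul_lin_l 1 0 0 c; rewrite !scale1r addr0; exact: self_add0.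
Qed.
Lemma bmul0r c : mul c 0 = 0.
Proof.
have := mul_lin_r 1 c 0 0; rewrite !scale1r addr0; exact: self_add0.
Qed.
Lemma bmulDl a b c : mul (a + b) c = mul a c + mul b c.
Proof. by have := mul_lin_l 1 a b c; rewrite !scale1r. Qed.
Lemma bmulDr a b c : mul c (a + b) = mul c a + mul c b.
Proof. by have := mul_lin_r 1 c a b; rewrite !scale1r. Qed.
Lemma bmulZl k a c : mul (k *: a) c = k *: mul a c.
Proof. by have := mul_lin_l k a 0 c; rewrite !addr0 bmul0l addr0. Qed.
Lemma bmulZr k a c : mul c (k *: a) = k *: mul c a.
Proof. by have := mul_lin_r k c a 0; rewrite !addr0 bmul0r addr0. Qed.
Lemma bmulNl a c : mul (- a) c = - mul a c.
Proof. by rewrite -scaleN1r bmulZl scaleN1r. Qed.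
Lemma bmulNr a c : mul c (- a) = - mul c a.
Proof. by rewrite -scaleN1r bmulZr scaleN1r. Qed.
Lemma bmulBl a b c : mul (a - b) c = mul a c - mul b c.
Proof. by rewrite bmulDl bmulNl. Qed.
Lemma bmulBr a b c : mul c (a - b) = mul c a - mul c b.
Proof. by rewrite bmulDr bmulNr. Qed.

Lemma lin_add (f : V -> V) : is_linear_map f -> forall x y, f (x + y) = f x + f y.
Proof. by move=> H x y; have := H 1 x y; rewrite !scale1r. Qed.
Lemma lin0 (f : V -> V) : is_linear_map f -> f 0 = 0.
Proof.
move=> H; have := lin_add H 0 0; rewrite addr0; exact: self_add0.
Qed.
Lemma linZ (f : V -> V) : is_linear_map f -> forall k x, f (k *: x) = k *: f x.
Proof. by move=> H k x; have := H k x 0; rewrite (lin0 H) !addr0. Qed.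
Lemma linB (f : V -> V) : is_linear_map f -> forall x y, f (x - y) = f x - f y.
Proof. by move=> H x y; rewrite (lin_add H) -[- y]scaleN1r (linZ H) scaleN1r. Qed.

End Alg.
From HB Require Import structures.
From mathcomp Require Import all_boot all_order all_algebra.
From mathcomp Require Import complex.
From mathcomp Require Import all_classical all_reals all_analysis.
Set Implicit Arguments. Unset Strict Implicit. Unset Printing Implicit Defensive.
Import Order.TTheory GRing.Theory Num.Theory.
Import numFieldNormedType.Exports.
Local Open Scope ring_scope.
Local Open Scope complex_scope.

Section Lin.
Variables (R : realType) (V : completeNormedModType R[i]).
Definition linw (f : V -> V) (Hf : is_linear_map f) : V -> V := f.
HB.instance Definition _ (f : V -> V) (Hf : is_linear_map f) :=
  GRing.isLinear.Build R[i] V V *:%R (linw Hf) Hf.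

Lemma lin_cont_bound (f : V -> V) (Hf : is_linear_map f) : continuous f ->
  exists M : R[i], 0 <= M /\ forall y, `|f y| <= M * `|y|.
Proof.
move=> Hc.
have := @continuous_linear_bounded _ V V 0 (linw Hf) (Hc 0).
move/linear_boundedP => [M [Mr HM]].
exists (`|M| + 1); split; first by rewrite addr_ge0.
apply: HM; rewrite (le_lt_trans (real_ler_norm Mr)) //.
by rewrite ltrDl ltr01.
Qed.

Lemma bound_lin_cont (f : V -> V) (Hf : is_linear_map f) (c : R[i]) :
  0 <= c -> (forall y, `|f y| <= c * `|y|) -> continuous f.
Proof.
move=> c0 Hb; apply: (@bounded_linear_continuous _ V V (linw Hf)).
apply/linear_boundedP; exists c; split; first by rewrite ger0_real.
move=> r cr y; rewrite (le_trans (Hb y)) //.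
by rewrite ler_wpM2r // ltW.
Qed.
End Lin.
From HB Require Import structures.
From mathcomp Require Import all_boot all_order all_algebra.
From mathcomp Require Import complex.
From mathcomp Require Import all_classical all_reals all_analysis.
From mathcomp Require Import ring.
Set Implicit Arguments. Unset Strict Implicit. Unset Printing Implicit Defensive.
Import Order.TTheory GRing.Theory Num.Theory.
Import numFieldNormedType.Exports.
Local Open Scope ring_scope.
Local Open Scope complex_scope.

Lemma archiC (R : realType) (z : R[i]) : 0 <= z -> exists m : nat, z < m%:R.
Proof.
move=> z0; have zr := ger0_real z0.
have := z0; rewrite lecE => /andP[_ Re0].
exists (Num.bound (complex.Re z)).
rewrite -(RRe_real zr) -(rmorph_nat (real_complex R)) ltcR.
exact: archi_boundP.
Qed.

Section Neumann.
Variables (R : realType) (V : completeNormedModType R[i]) (mul : V -> V -> V).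
Hypothesis HBA : is_banach_algebra mul.
Variables (u : V) (A : R[i]).
Let rp n := iter n (fun y => mul y u) u.
Hypothesis HA : forall n, `|rp n| * 2 ^+ n <= A.
Let q : R[i] := 2^-1.

Lemma q_ge0 : 0 <= q. Proof. by rewrite /q invr_ge0 ler0n. Qed.
Lemma A_ge0 : 0 <= A. Proof. by rewrite (le_trans _ (HA 0)) // expr0 mulr1. Qed.

Lemma hq n : `|rp n| <= A * q ^+ n.
Proof.
rewrite /q exprVn ler_pdivlMr ?exprn_gt0 //; exact: HA.
Qed.

Lemma geo_tail i k : \sum_(i <= l < i + k) A * q ^+ l + 2 * A * q ^+ (i + k) = 2 * A * q ^+ i.
Proof.
elim: k => [|k IH]; first by rewrite addn0 big_geq // add0r.
rewrite addnS big_nat_recr /= ?leq_addr // -addrA -IH; congr (_ + _).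
rewrite exprS /q.
have h2 : (2 : R[i]) != 0 by rewrite pnatr_eq0.
by field.
Qed.

Lemma tail_bound i j : `|\sum_(i <= l < j) rp l| <= 2 * A * q ^+ i.
Proof.
have [ij|ji] := leqP i j; last first.
  by rewrite big_geq ?normr0 ?mulr_ge0 ?exprn_ge0 ?A_ge0 ?q_ge0 // ltnW.
rewrite (le_trans (ler_norm_sum _ _ _)) //.
rewrite -(subnKC ij) -(geo_tail i (j - i)) -[X in X <= _]addr0 lerD //; last first.
  by rewrite !mulr_ge0 ?exprn_ge0 ?A_ge0 ?q_ge0.
by apply: ler_sum => l _; apply: hq.
Qed.

Lemma series_cvg : cvgn (series rp).
Proof.
apply/cauchy_cvgP/cauchy_seriesP => e e0.
have [N HN] : exists N : nat, 2 * A / e < N%:R.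
  by apply: archiC; rewrite divr_ge0 ?mulr_ge0 ?A_ge0 ?ltW.
exists ((fun k : nat => (N <= k)%N) : set nat, (fun k : nat => (N <= k)%N) : set nat) => /=.
  by split; exists N.
move=> [i j] /= [Hi Hj].
rewrite (le_lt_trans (tail_bound i j)) //.
rewrite /q exprVn ltr_pdivrMr ?exprn_gt0 //.
move: HN; rewrite ltr_pdivrMr // => HN.
rewrite (lt_le_trans HN) // mulrC ler_wpM2l ?ltW //.
have : (N < 2 ^ i)%N by rewrite (leq_ltn_trans Hi) // ltn_expl.
by rewrite -(ltr_nat R[i]) natrX.
Qed.

Lemma series_shift n : mul (series rp n) u = series rp n.+1 - u.
Proof.
elim: n => [|n IH]; first by rewrite /series /= big_nat1 big_geq // (bmul0l HBA) subrr.
rewrite seriesSr (bmulDl HBA) IH seriesSr /=.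
by rewrite [series rp n.+2]seriesSr [series rp n.+1]seriesSr addrAC.
Qed.

Lemma neumann_qi : left_quasi_invertible mul u.
Proof.
have Hs := series_cvg.
set s := limn (series rp) in Hs.
have Hf : is_linear_map (fun y => mul y u) by move=> k a b; exact: mul_lin_l.
have Hc : continuous (fun y => mul y u).
  apply: (bound_lin_cont Hf (normr_ge0 u)) => y.
  by rewrite mulrC mul_norm.
have H1 := @continuous_cvg _ _ _ _ _ (series rp) (fun y => mul y u) s (Hc s) Hs.
have H2 : ((fun y => mul y u) \o series rp @ \oo --> s - u)%classic.
  have -> : ((fun y => mul y u) \o series rp) = (fun n => series rp n.+1 - u).
    by apply: funext => n /=; rewrite series_shift.
  apply: cvgB; last exact: cvg_cst.
  by rewrite (cvg_shiftS (series rp)).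
have E : mul s u = s - u.
  exact: (cvg_unique (@norm_hausdorff _ V) (H1 _) H2).

exists (- s); rewrite (bmulNl HBA) /= E.
by rewrite opprK addrACA addNr subrr addr0.
Qed.
End Neumann.
From HB Require Import structures.
From mathcomp Require Import all_boot all_order all_algebra.
From mathcomp Require Import complex.
From mathcomp Require Import all_classical all_reals all_analysis.
From mathcomp Require Import ring.
Set Implicit Arguments. Unset Strict Implicit. Unset Printing Implicit Defensive.
Import Order.TTheory GRing.Theory Num.Theory.
Import numFieldNormedType.Exports.
Local Open Scope ring_scope.
Local Open Scope complex_scope.

Section Rad.
Variables (R : realType) (V : completeNormedModType R[i]) (mul : V -> V -> V).
Hypothesis HBA : is_banach_algebra mul.
Hypothesis Hrad : forall a, jacobson_rad mul a <-> rann mul a.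
Hypothesis Hcomm : quotient_rad_commutative mul.

Lemma F3 y p q : mul y (mul p q) = mul y (mul q p).
Proof.
have := (Hrad _).1 (Hcomm p q) y; rewrite (bmulBr HBA) => /eqP.
by rewrite subr_eq0 => /eqP.
Qed.

Definition bnd (T : aend V) (c : R[i]) := forall y, `|T y| <= c * `|y|.

Variables (d : V -> V) (dlin : is_linear_map d)
  (dder : forall a b, d (mul a b) = mul (d a) b + mul a (d b)) (x : V).

Definition Sx : aend V := @AEnd V (fun y => mul y x) (fun a b => bmulBl HBA a b x).
Definition Dd : aend V := AEnd (linB dlin).
Definition Rdx : aend V := @AEnd V (fun y => mul y (d x)) (fun a b => bmulBl HBA a b (d x)).

Lemma SDcomm : Dd * Sx - Sx * Dd = Rdx.
Proof.
apply: aend_ext => y; rewrite aeE_add aeE_opp !aeE_mul /=.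
by rewrite dder addrC addKr.
Qed.

Lemma CScomm : (Dd * Sx - Sx * Dd) * Sx = Sx * (Dd * Sx - Sx * Dd).
Proof.
rewrite SDcomm; apply: aend_ext => y; rewrite !aeE_mul /=.
by rewrite -!(bmulA HBA) F3.
Qed.

Lemma bnd_del T c : 0 <= c -> bnd T c -> bnd (del Sx T) (2 * `|x| * c).
Proof.
move=> c0 HT y; rewrite /del aeE_add aeE_opp !aeE_mul /=.
rewrite (le_trans (ler_normB _ _)) //.
have h1 : `|T (mul y x)| <= c * `|y| * `|x|.
  by rewrite -mulrA (le_trans (HT _)) // ler_wpM2l // (mul_norm HBA).
have h2 : `|mul (T y) x| <= c * `|y| * `|x|.
  by rewrite (le_trans (mul_norm HBA _ _)) // ler_wpM2r.
rewrite (le_trans (lerD h1 h2)) //.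
by rewrite le_eqVlt; apply/orP; left; apply/eqP; ring.
Qed.

Lemma bnd_iter n T c : 0 <= c -> bnd T c ->
  bnd (iter n (del Sx) T) ((2 * `|x|) ^+ n * c).
Proof.
move=> c0 HT; elim: n => [|n IH] /=; first by rewrite expr0 mul1r.
have -> : (2 * `|x|) ^+ n.+1 * c = 2 * `|x| * ((2 * `|x|) ^+ n * c).
  by rewrite exprS !mulrA.
by apply: bnd_del => //; rewrite mulr_ge0 // exprn_ge0 // mulr_ge0.
Qed.

Variables (M : R[i]) (M0 : 0 <= M) (dM : forall y, `|d y| <= M * `|y|).

Lemma bnd_Dn n : bnd (Dd ^+ n) (M ^+ n).
Proof.
move=> y; rewrite aeE_exp; elim: n => [|n IH] /=; first by rewrite expr0 mul1r.
rewrite (le_trans (dM _)) // exprS -mulrA ler_wpM2l //.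
Qed.

Lemma KS_bound n w :
  `|iter n (fun y => mul y (d x)) w| * n`!%:R <= (2 * `|x|) ^+ n * M ^+ n * `|w|.
Proof.
have [H1 _] := KS CScomm n.
have := bnd_iter n (exprn_ge0 n M0) (@bnd_Dn n) w.
rewrite H1 aeE_natmul aeE_exp normrMn SDcomm => H.
by rewrite [X in X <= _]mulr_natr. Qed.

Lemma iter_commute (f g : V -> V) : (forall y, f (g y) = g (f y)) ->
  forall n y, iter n (fun y => f (g y)) y = iter n f (iter n g y).
Proof.
move=> fg n; have gi : forall k z, g (iter k f z) = iter k f (g z).
  by elim=> //= k IH z; rewrite -fg IH.
elim: n => //= n IH y; rewrite IH; congr f; rewrite gi; congr (iter n f).
Qed.

Lemma iter_Rb_bound (b : V) n w : `|iter n (fun y => mul y b) w| <= `|b| ^+ n * `|w|.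
Proof.
elim: n => [|n IH] /=; first by rewrite expr0 mul1r.
by rewrite (le_trans (mul_norm HBA _ _)) // exprSr mulrAC ler_wpM2r.
Qed.

Lemma nat_fact_bound m n : (m ^ n <= m ^ m * n`!)%N.
Proof.
elim: n => [|n IH]; first by rewrite expn0 fact0 muln1 expn_gt0; case: m.
have [nm|mn] := ltnP n m.
  have m0 : (0 < m)%N by apply: leq_ltn_trans nm.
  by rewrite (@leq_trans (m ^ m)) // ?leq_pexp2l // leq_pmulr // fact_gt0.
rewrite expnS factS mulnCA leq_mul //.
exact: leqW.
Qed.

Lemma dx_rad b : left_quasi_invertible mul (mul b (d x)).
Proof.
set u := mul b (d x).
set K := 2 * `|x| * M * `|b|.
have K0 : 0 <= K by rewrite !mulr_ge0.
have [m Hm] := archiC (mulr_ge0 (ler0n _ 2) K0).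
apply: (@neumann_qi R V mul HBA u (m%:R ^+ m * `|u|)) => n.
have E : iter n (fun y => mul y u) u = iter n (fun y => mul y (d x)) (iter n (fun y => mul y b) u).
  rewrite -iter_commute; last by move=> y; rewrite -!(bmulA HBA) F3.
  by congr iter; apply: funext => y; rewrite (bmulA HBA).
rewrite E.
set w := iter n (fun y => mul y b) u.
have h1 := KS_bound n w.
have h2 := iter_Rb_bound b n u.
have fn : (0 : R[i]) < n`!%:R by rewrite ltr0n fact_gt0.
have step1 : `|iter n (fun y => mul y (d x)) w| * n`!%:R * 2 ^+ n <= (2 * K) ^+ n * `|u|.
  rewrite (le_trans (ler_wpM2r _ h1)) ?exprn_ge0 //.
  rewrite (le_trans (_ : _ <= (2 * `|x|) ^+ n * M ^+ n * (`|b| ^+ n * `|u|) * 2 ^+ n)) //.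
    by rewrite ler_wpM2r ?exprn_ge0 // ler_wpM2l // mulr_ge0 ?exprn_ge0 ?mulr_ge0.
  by rewrite le_eqVlt; apply/orP; left; apply/eqP; rewrite /K !exprMn; ring.
have step2 : (2 * K) ^+ n <= m%:R ^+ n.
  by apply: lerXn2r; rewrite ?ltW // nnegrE ?mulr_ge0 ?ler0n.
have step3 : (m%:R ^+ n : R[i]) <= m%:R ^+ m * n`!%:R.
  by rewrite -!natrX -natrM ler_nat nat_fact_bound.
rewrite -(ler_pM2r fn) mulrAC (le_trans step1) //.
rewrite (le_trans (ler_wpM2r (normr_ge0 _) step2)) //.
rewrite (le_trans (ler_wpM2r (normr_ge0 _) step3)) //.
by rewrite mulrAC.
Qed.
End Rad.
From HB Require Import structures.
From mathcomp Require Import all_boot all_order all_algebra.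
From mathcomp Require Import complex.
From mathcomp Require Import all_classical all_reals all_analysis.
From mathcomp Require Import ring.
Import Order.TTheory GRing.Theory Num.Theory.
Import numFieldNormedType.Exports.
Local Open Scope ring_scope.
Local Open Scope complex_scope.

Theorem theorem4p9 (R : realType) (V : completeNormedModType R[i])
  (mul : V -> V -> V) :
  is_banach_algebra mul ->
  (forall a, jacobson_rad mul a <-> rann mul a) ->
  quotient_rad_commutative mul ->
  has_right_identity mul ->
  exists Psi : V -> (V -> V), quotient_rad_iso_frakC mul Psi.
Proof.
move=> HBA Hrad Hcomm [e He].
have F3' := F3 HBA Hrad Hcomm.
exists (fun a x => mul x a); split.
- move=> a b; split.
    move=> H; apply/(Hrad _).2 => y.
    have /= E := congr1 (fun f => f y) H.
    by rewrite (bmulBr HBA) E subrr.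
  move=> /(Hrad _).1 H; apply: funext => y.
  by apply/eqP; rewrite -subr_eq0 -(bmulBr HBA) H.
- by move=> k a b; apply: funext => x; rewrite (mul_lin_r HBA).
- by move=> a b; apply: funext => x /=; rewrite F3' (bmulA HBA).
move=> delta; split; last first.
  move=> [a <-].
  have Hl : is_linear_map (fun x => mul x a) by move=> k u v; exact: mul_lin_l.
  split; [split => // | split].
    apply: (bound_lin_cont Hl (normr_ge0 a)) => y.
    by rewrite mulrC (mul_norm HBA).
  split => //; exists (fun _ => 0); split.
    split; first by move=> k u v; rewrite scaler0 addr0.
    by move=> u v; rewrite (bmul0l HBA) (bmul0r HBA) addr0.
  by move=> u v; rewrite (bmul0l HBA) addr0 (bmulA HBA).
  move=> x y; rewrite /commutator -(bmulA HBA) F3' subrr.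
  by rewrite (bmul0l HBA) (bmul0r HBA).
move=> [[dlin dcont] [[_ [d [[dl dd] Hdelta]]] Hcent]].
exists (delta e).
have Hdx : forall x, delta x = mul x (delta e) + d x.
  by move=> x; have := Hdelta x e; rewrite !He.
suff d0 : forall x, d x = 0.
  by apply: funext => x; rewrite [RHS]Hdx d0 addr0.
have [Md [Md0 HMd]] := lin_cont_bound dlin dcont.
have HM : forall y, `|d y| <= (Md + `|delta e|) * `|y|.
  move=> y; have -> : d y = delta y - mul y (delta e) by rewrite Hdx addrC addKr.
  rewrite (le_trans (ler_normB _ _)) // mulrDl lerD //.
  by rewrite mulrC (mul_norm HBA).
have M0 : 0 <= Md + `|delta e| by rewrite addr_ge0.
have Pc : forall x, mul (d x) x = mul x (d x).
  move=> x; have := Hcent x e; rewrite He /commutator.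
  rewrite (bmulBr HBA) F3' subrr => /eqP; rewrite subr_eq0 => /eqP.
  rewrite Hdx (bmulDl HBA) (bmulDr HBA) -(bmulA HBA) F3'.
  by move/addrI.
have dadd := lin_add dl.
have der : forall y, mul y (d e) = 0.
  move=> y; have := dd y e; rewrite !He => H.
  by apply: (addrI (d y)); rewrite addr0 -H.
have de0 : d e = 0.
  by have := Pc e; rewrite He der.
have edx : forall x, mul e (d x) = d x.
  move=> x; have := Pc (x + e).
  rewrite dadd de0 addr0 (bmulDr HBA) (bmulDl HBA) He Pc.
  by move/addrI.
move=> x; rewrite -edx.
have := (Hrad (d x)).1 (dx_rad HBA Hrad Hcomm dl dd x M0 HM).
by apply.
Qed.
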